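(* Let $\mathcal{S}$ be a state space, $\mathcal{A}$ a finite action space, $\rho$ a distribution on $\mathcal{S}$, and $r^*:\mathcal{S}\times\mathcal{A}\to\mathbb{R}$ a reward with Bradley–Terry preference model $\mathbb{P}_{r^*}(y=1|s,a,a')=\sigma(r^*(s,a)-r^*(s,a'))$, $\sigma(x)=1/(1+e^{-x})$. Then for any policies $\pi,\tilde\pi$ and any $s\in\mathcal{S}$, $$1-\mathbb{TV}(\pi(\cdot|s)\|\tilde\pi(\cdot|s))\le\min_{\gamma>0}\sqrt{\big(\gamma+2\mathbb{P}_{r^*}(\pi(\cdot|s)\succ\tilde\pi(\cdot|s))\big)\log\frac{1+\gamma}{\gamma}},$$ and $$1-\mathbb{E}_{s\sim\rho}\big[\mathbb{TV}(\pi(\cdot|s)\|\tilde\pi(\cdot|s))\big]\le\min_{\gamma>0}\sqrt{\big(\gamma+2\mathbb{P}_{r^*}(\pi\succ\tilde\pi)\big)\log\frac{1+\gamma}{\gamma}}.$$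
   Context: $\mathbb{TV}(p\|q)=\frac12\sum_a|p(a)-q(a)|$. $\mathbb{P}_{r^*}(\pi(\cdot|s)\succ\tilde\pi(\cdot|s)):=\mathbb{E}_{a\sim\pi(\cdot|s),a'\sim\tilde\pi(\cdot|s)}[\mathbb{P}_{r^*}(y=1|s,a,a')]$ and $\mathbb{P}_{r^*}(\pi\succ\tilde\pi):=\mathbb{E}_{s\sim\rho,a\sim\pi(\cdot|s),a'\sim\tilde\pi(\cdot|s)}[\mathbb{P}_{r^*}(y=1|s,a,a')]$. *)

(* Defs.v *)
From HB Require Import structures.
From mathcomp Require Import all_boot all_order all_algebra.
From mathcomp Require Import all_classical all_reals all_analysis.
Set Implicit Arguments. Unset Strict Implicit. Unset Printing Implicit Defensive.
Import Order.TTheory GRing.Theory Num.Theory.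
Local Open Scope ring_scope.
Local Open Scope classical_set_scope.

Definition sigmoid (R : realType) (x : R) : R := (1 + expR (- x))^-1.

Definition BT_prob (R : realType) (S : Type) (A : finType) (r : S -> A -> R)
  (s : S) (a a' : A) : R := sigmoid (r s a - r s a').

Definition is_policy (R : realType) (S : Type) (A : finType) (pi : S -> A -> R) : Prop :=
  forall s, (forall a, 0 <= pi s a) /\ \sum_(a : A) pi s a = 1.

Definition TV (R : realType) (A : finType) (p q : A -> R) : R :=
  2^-1 * \sum_(a : A) `|p a - q a|.

(* P_{r*}(pi(.|s) > pi~(.|s)) = E_{a~pi(.|s), a'~pi~(.|s)} [P(y=1|s,a,a')] *)
Definition pref_state (R : realType) (S : Type) (A : finType) (r : S -> A -> R)
  (pi pi' : S -> A -> R) (s : S) : R :=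
  \sum_(a : A) \sum_(a' : A) pi s a * pi' s a' * BT_prob r s a a'.

Definition pref (d : measure_display) (S : measurableType d) (R : realType)
  (rho : probability S R) (A : finType) (r : S -> A -> R) (pi pi' : S -> A -> R) : R :=
  Rintegral rho setT (pref_state r pi pi').

(* Main.v *)
Require Import Defs.
From HB Require Import structures.
From mathcomp Require Import all_boot all_order all_algebra.
From mathcomp Require Import all_classical all_reals all_analysis.
From mathcomp Require Import ring lra measurable_realfun.
Import Order.TTheory GRing.Theory Num.Theory.
Import numFieldNormedType.Exports.
Local Open Scope ring_scope.
Local Open Scope classical_set_scope.

Lemma sigmoid_ge0 (R : realType) (x : R) : 0 <= sigmoid x.
Proof. by rewrite /sigmoid invr_ge0 addr_ge0 // expR_ge0. Qed.

Lemma sigmoidN (R : realType) (x : R) : sigmoid x + sigmoid (- x) = 1.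
Proof.
rewrite /sigmoid opprK expRN.
have e0 : 0 < expR x := expR_gt0 x.
field.
apply/andP; split; rewrite gt_eqF //; lra.
Qed.
Lemma minE (R : realType) (x y : R) : Num.min x y = 2^-1 * (x + y - `|x - y|).
Proof.
rewrite minEle; case: leP => xy.
  by rewrite ler0_norm ?subr_le0 //; field.
by rewrite gtr0_norm ?subr_gt0 //; field.
Qed.

Lemma state_bound (R : realType) (A : finType) (p q ra : A -> R) :
  (forall a, 0 <= p a) -> (forall a, 0 <= q a) ->
  \sum_a p a = 1 -> \sum_a q a = 1 ->
  0 <= 1 - TV p q <= 1 /\
  (1 - TV p q) ^+ 2 <= 2 * \sum_a \sum_a' p a * q a' * sigmoid (ra a - ra a').
Proof.
move=> p0 q0 p1 q1.
pose m a := Num.min (p a) (q a).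
have m0 a : 0 <= m a by rewrite /m le_min p0 q0.
have mp a : m a <= p a by rewrite /m ge_min lexx.
have mq a : m a <= q a by rewrite /m ge_min lexx orbT.
have tE : 1 - TV p q = \sum_a m a.
  rewrite /m; under eq_bigr do rewrite minE.
  by rewrite -mulr_sumr sumrB big_split /= p1 q1 /TV; field.
rewrite tE; split.
  apply/andP; split; first exact: sumr_ge0.
  by rewrite -p1; apply: ler_sum.
pose Q := \sum_a \sum_a' m a * m a' * sigmoid (ra a - ra a').
have QP : Q <= \sum_a \sum_a' p a * q a' * sigmoid (ra a - ra a').
  apply: ler_sum => a _; apply: ler_sum => a' _.
  apply: ler_wpM2r; first exact: sigmoid_ge0.
  by apply: ler_pM.
have Q2 : 2 * Q = (\sum_a m a) ^+ 2.
  have QQ : Q = \sum_a \sum_a' m a * m a' * sigmoid (- (ra a - ra a')).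
    rewrite /Q exchange_big /=; apply: eq_bigr => a _; apply: eq_bigr => a' _.
    by rewrite opprB (mulrC (m a')).
  rewrite mulr2n mulrDl mul1r {1}QQ /Q -big_split /=.
  rewrite expr2 mulr_suml; apply: eq_bigr => a _.
  rewrite -big_split mulr_sumr /=; apply: eq_bigr => a' _.
  by rewrite -mulrDr addrC sigmoidN mulr1.
rewrite -Q2; apply: ler_wpM2l => //.
Qed.
Lemma ln_lb (R : realType) (g : R) : 0 < g -> (1 + g)^-1 <= ln ((1 + g) / g).
Proof.
move=> g0.
have h1 : 0 < 1 + g by lra.
have h := @le_ln1Dx R (- (1 + g)^-1).
have : -1 < - (1 + g)^-1.
  rewrite ltrN2 invf_lt1 //; lra.
move/h.
have -> : 1 + - (1 + g)^-1 = ((1 + g) / g)^-1.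
  by field; apply/andP; split; rewrite gt_eqF.
rewrite lnV; first lra.
by rewrite posrE divr_gt0.
Qed.

Lemma key (R : realType) (g t G : R) : 0 < g -> 0 <= t <= 1 -> t ^+ 2 <= G ->
  t <= Num.sqrt ((g + G) * ln ((1 + g) / g)).
Proof.
move=> g0 /andP[t0 t1] tG.
have L := @ln_lb R g g0.
have h1 : 0 < 1 + g by lra.
have h2 : t ^+ 2 <= (g + G) * ln ((1 + g) / g).
  apply: (@le_trans _ _ ((g + t ^+ 2) / (1 + g))).
    rewrite ler_pdivlMr //.
    have tt : t ^+ 2 <= 1 by rewrite expr2; nra.
    have : g * t ^+ 2 <= g * 1 by rewrite ler_pM2l.
    lra.
  have t2 : 0 <= t ^+ 2 by rewrite exprn_ge0.
  rewrite ler_pM //; [lra | by rewrite invr_ge0; lra | lra].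
rewrite -(ger0_norm t0) -sqrtr_sqr.
exact: ler_wsqrtr.
Qed.


Lemma sigmoid_meas (R : realType) : measurable_fun setT (@sigmoid R).
Proof.
apply: continuous_measurable_fun => x; rewrite /sigmoid.
apply: (@continuousV R R (fun x => 1 + expR (- x)) x).
  by rewrite gt_eqF // ltr_pwDl ?expR_gt0.
apply: continuousD; first exact: cst_continuous.
apply: continuous_comp; last exact: continuous_expR.
exact: continuousN.
Qed.

Lemma bnd_int d (S : measurableType d) (R : realType) (rho : probability S R)
  (f : S -> R) : measurable_fun setT f -> (forall s, `|f s| <= 1) ->
  rho.-integrable setT (EFin \o f).
Proof.
move=> mf fb; apply: measurable_bounded_integrable => //.
  by apply: (le_lt_trans (probability_le1 rho measurableT)); rewrite ltry.
exists 1; split => // M M1 x _.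
exact: le_trans (fb x) (ltW M1).
Qed.

Lemma intZ d (S : measurableType d) (R : realType) (rho : probability S R)
  (c : R) (f : S -> R) : rho.-integrable setT (EFin \o f) ->
  rho.-integrable setT (EFin \o (fun s => c * f s)).
Proof. move=> h; exact: (integrableZl measurableT c h). Qed.
Lemma intB d (S : measurableType d) (R : realType) (rho : probability S R)
  (f g : S -> R) : rho.-integrable setT (EFin \o f) -> rho.-integrable setT (EFin \o g) ->
  rho.-integrable setT (EFin \o (fun s => f s - g s)).
Proof. move=> h1 h2; exact: (integrableB measurableT h1 h2). Qed.

Theorem lemmaG2 (d : measure_display) (S : measurableType d) (R : realType)
  (A : finType) (rho : probability S R) (r : S -> A -> R)
  (pi pit : S -> A -> R) :
  (forall a, measurable_fun setT (fun s => r s a)) ->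
  is_policy pi -> is_policy pit ->
  (forall a, measurable_fun setT (fun s => pi s a)) ->
  (forall a, measurable_fun setT (fun s => pit s a)) ->
  (forall s : S, forall gamma : R, 0 < gamma ->
     1 - TV (pi s) (pit s) <=
     Num.sqrt ((gamma + 2 * pref_state r pi pit s) * ln ((1 + gamma) / gamma)))
  /\
  (forall gamma : R, 0 < gamma ->
     1 - Rintegral rho setT (fun s => TV (pi s) (pit s)) <=
     Num.sqrt ((gamma + 2 * pref rho r pi pit) * ln ((1 + gamma) / gamma))).
Proof.
move=> mr hpi hpit mpi mpit.
have SB s : 0 <= 1 - TV (pi s) (pit s) <= 1 /\
    (1 - TV (pi s) (pit s)) ^+ 2 <= 2 * pref_state r pi pit s.
  have [p0 p1] := hpi s; have [q0 q1] := hpit s.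
  exact: (@state_bound R A (pi s) (pit s) (r s) p0 q0 p1 q1).
split.
  move=> s g g0; have [h1 h2] := SB s; exact: key.
move=> g g0.
pose tv s := TV (pi s) (pit s).
pose P s := pref_state r pi pit s.
have tv01 s : 0 <= tv s <= 1.
  by have [/andP[h1 h2] _] := SB s; rewrite /tv; apply/andP; split; lra.
have P01 s : 0 <= P s <= 1.
  have [p0 p1] := hpi s; have [q0 q1] := hpit s.
  rewrite /P /pref_state /BT_prob; apply/andP; split.
    apply: sumr_ge0 => a _; apply: sumr_ge0 => a' _.
    by rewrite mulr_ge0 ?sigmoid_ge0 // mulr_ge0.
  rewrite -p1; apply: ler_sum => a _.
  apply: (@le_trans _ _ (\sum_a' pi s a * pit s a')).
    apply: ler_sum => a' _; rewrite -[X in _ <= X]mulr1.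
    rewrite ler_pM // ?mulr_ge0 ?sigmoid_ge0 //.
    rewrite /sigmoid invf_le1 ?ler_wpDr ?expR_ge0 //.
  by rewrite -mulr_sumr q1 mulr1.
have mtv : measurable_fun setT tv.
  apply: measurable_funM; first exact: measurable_cst.
  apply: measurable_sum => a; apply: measurableT_comp; first exact: normr_measurable.
  exact: measurable_funB.
have mP : measurable_fun setT P.
  apply: measurable_sum => a; apply: measurable_sum => a'.
  apply: measurable_funM; first exact: measurable_funM.
  apply: measurableT_comp; first exact: sigmoid_meas.
  exact: measurable_funB.
have itv : rho.-integrable setT (EFin \o tv).
  apply: bnd_int => // s; have /andP[h1 h2] := tv01 s; rewrite ger0_norm //.
have iP : rho.-integrable setT (EFin \o P).
  apply: bnd_int => // s; have /andP[h1 h2] := P01 s; rewrite ger0_norm //.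
have icst c : rho.-integrable setT (EFin \o (fun _ : S => c)).
  apply/integrableP; split; first exact/measurable_EFinP/measurable_cst.
  rewrite integral_cst // ltey_eq fin_numM //.
  by rewrite ge0_fin_numE // (le_lt_trans (probability_le1 rho measurableT)) ?ltry.
have r1 : fine (rho setT) = 1 by rewrite probability_setT.
set T := 1 - Rintegral rho setT tv.
have T0 : 0 <= T.
  rewrite /T subr_ge0; apply: (@le_trans _ _ (Rintegral rho setT (fun _ => 1))).
    apply: le_Rintegral => // s _; by have /andP[] := tv01 s.
  by rewrite Rintegral_cst // r1 mulr1.
have T1 : T <= 1.
  rewrite /T; suff : 0 <= Rintegral rho setT tv by lra.
  by apply: Rintegral_ge0 => s _; have /andP[] := tv01 s.
apply: key => //; first by rewrite T0 T1.
have -> : pref rho r pi pit = Rintegral rho setT P by [].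
rewrite -RintegralZl //.
have E : Rintegral rho setT (fun s => (2 * T - T ^+ 2) - (2 * T) * tv s) = T ^+ 2.
  rewrite RintegralB //; last exact: intZ.
  rewrite RintegralZl // Rintegral_cst // r1 mulr1 /T; ring.
rewrite -E; apply: le_Rintegral => //.
- by apply: intB => //; exact: intZ.
- exact: intZ.
move=> s _; have [/andP[h1 h2] h3] := SB s.
have hs : 0 <= (1 - tv s - T) ^+ 2 by rewrite sqr_ge0.
move: hs; rewrite /tv => hs.
nra.
Qed.
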